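(* Consider the planning procedure described in the context, run at commit times $t_0<t_1<\cdots<t_k<\cdots$ over the mission horizon $[t_0,t_f]$, and let $p^{\Omega_{\mathrm{com}}}_k$ be the tube trajectory committed at $t_k$. Define the solution as the concatenation of committed tubes $p^\Omega_{\mathrm{sol}}=\{p^{\Omega_{\mathrm{com}}}_0,p^{\Omega_{\mathrm{com}}}_1,\dots,p^{\Omega_{\mathrm{com}}}_k,\dots\}$. Assume the cost of the initial backup satisfies $J^{\mathrm{back}}_0\le B$. If at each $t_k$ the valid pairs are generated, the budget-feasible set $\mathcal{F}^c_k$ is formed, the commitment rule is applied, and the system tracks each committed tube, then the solution is safe, i.e. its tube lies in $\mathcal{S}(t)$ for all $t\in[t_0,t_f]$, and $J(p^\Omega_{\mathrm{sol}})\le B$.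
   Context: System: $\dot x=f_0(x)+F(x)\theta_f+(g_0(x)+G(x)\theta_g)u+n_{\mathrm{add}}(t)$, $y=c(x)+n_{\mathrm{meas}}(t)$, with state $x\in\mathcal{X}\subset\mathbb{R}^n$, input $u\in\mathcal{U}$, unknown parameters $\theta=(\theta_f,\theta_g)$ in a known compact set $\Theta$, and bounded disturbances. The safe set is $\mathcal{S}(t)\subseteq\mathcal{X}$, the goal set $\mathcal{G}$, the budget $B$, and the mission cost $J(p_x,p_u)=\int_{t_0}^{t_f}\ell(p_x,p_u)\,dt+\ell_T(p_x(t_f))$. A trajectory $p=(p_x,p_u)$ on $[t_i,t_f]$ satisfies the nominal dynamics with fixed parameter estimates. A tube cross-section $\mathcal{E}(t)$ is a compact set containing the origin that bounds the deviation of the true state from $p_x(t)$ for all parameters in $\Theta$ and all admissible disturbances; the tube is $\Omega(t)=p_x(t)\oplus\mathcal{E}(t)$. A robust controlled-invariant (RCI) tube trajectory $p^\Omega=(p_x,p_u,\Omega)$ satisfies tightened constraints $p_x(t)\in\mathcal{S}\ominus\mathcal{E}(t)$, $p_u(t)\in\mathcal{U}\ominus\Delta U(t)$, $p_x(t_f)\in\mathcal{G}\ominus\mathcal{E}(t_f)$, and admits an ancillary controller $u=p_u+\pi(t,x,p^\Omega)$ such that $x(t_i)\in\Omega(t_i)$ implies $x(t)\in\Omega(t)$ for all $t$ and all parameters/disturbances. Procedure at each $t_k$: (1) compute a backup RCI tube trajectory $p^{\Omega_{\mathrm{bak}}}_k$ on $[t_k,t_f]$ with $\Omega^{\mathrm{bak}}_k(t)\subseteq\mathcal{S}(t)$,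 built from the current parameter set $\Theta^k$. (2) For horizons $T^{c,k}_i=iT_c$, $i=1,\dots,N_k$ with $N_k=\max\{i: t_k+iT_c\le t_f\}$, the conservative candidate $p^{\Omega_{\mathrm{cons}},i}_k$ is the backup restricted to $[t_k,t_k+T^{c,k}_i]$, and an informative candidate $p^{\mathrm{info},i}_k$ is a trajectory on this interval ending at $p^{\mathrm{cons},i}_{k,x}(t_k+T^{c,k}_i)$. The pair is valid if there is a tube $\Omega^{\mathrm{info},i}_k=p^{\mathrm{info},i}_{k,x}\oplus\mathcal{E}^{\mathrm{info},i}_k$ making $p^{\Omega_{\mathrm{info}},i}_k$ an RCI tube trajectory with $\Omega^{\mathrm{info},i}_k(t)\subseteq\mathcal{S}\ominus\mathcal{E}(t)$ and $p^{\mathrm{info},i}_{k,u}(t)\in\mathcal{U}\ominus\Delta U(t)$ on the horizon. (3) With $J^k_{\mathrm{exec}}$ the cost of the executed trajectory up to $t_k$, $J^k_{\mathrm{back}}$ the cost of the backup from $t_k$ to $t_f$, and $\Delta J_i=J(p^{\Omega_{\mathrm{info}},i}_k)-J(p^{\Omega_{\mathrm{cons}},i}_k)$, the feasible set is $\mathcal{F}^c_k=\{i:\text{pair }i\text{ valid},\ J^k_{\mathrm{exec}}+J^k_{\mathrm{back}}+\Delta J_i\le B\}$. (4) If $\mathcal{F}^c_k\neq\emptyset$, commit the informative tube of the pair maximizing the score $s^{c,k}_i=e^{-\lambda T^{c,k}_i}\Delta w_i$ ($\lambda>0$, $\Delta w_i$ the predicted reduction in average directional width of the parameter set); otherwise commit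 the conservative candidate with the smallest horizon. After execution the parameter set is updated by set-membership identification $\Theta^{k+1}=\Theta^k\cap\{\theta:|z(t)-\Phi(x(t),u(t))\theta|\le\overline w\}$ (so it is non-increasing and contains the true parameter), and the backup is recomputed. Standing assumptions: the executed trajectory equals the planned committed trajectory, measurements satisfy $z_j=\Phi_j\theta^\star+w_j$ with $\|w_j\|_\infty\le\overline w$; and tube cost is monotone under set inclusion: if $\Theta'\subseteq\Theta$, the RCI tube trajectory computed from $\Theta'$ on $[t_k,t_f]$ has cost no larger than the one computed from $\Theta$. *)

(* Defs.v *)
From HB Require Import structures.
From mathcomp Require Import all_boot all_order all_algebra.
From mathcomp Require Import all_classical all_reals all_analysis.
Set Implicit Arguments. Unset Strict Implicit. Unset Printing Implicit Defensive.
Import Order.TTheory GRing.Theory Num.Theory.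
Import numFieldNormedType.Exports.
Local Open Scope classical_set_scope.
Local Open Scope ring_scope.

Definition mink {V : zmodType} (a : V) (E : set V) : set V := [set a + e | e in E].
Definition pdiff {V : zmodType} (S E : set V) : set V := [set x | forall e, E e -> S (x + e)].

Section Defs.
Variables (R : realType) (n m qf qg r : nat).

Definition param := ('cV[R]_qf * 'cV[R]_qg)%type.

(* x' = f0(x) + F(x) th_f + (g0(x) + G(x) th_g) u + n_add,
   with G(x) th_g := \sum_j (th_g)_j G_j(x) *)
Record system := Sys {
  f0 : 'cV[R]_n -> 'cV[R]_n;
  Fm : 'cV[R]_n -> 'M[R]_(n, qf);
  g0 : 'cV[R]_n -> 'M[R]_(n, m);
  Gm : 'cV[R]_n -> 'I_qg -> 'M[R]_(n, m);
  Dadd : set 'cV[R]_n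
}.

Definition rhs (sys : system) (x : 'cV[R]_n) (th : param) (u : 'cV[R]_m)
  (d : 'cV[R]_n) : 'cV[R]_n :=
  f0 sys x + Fm sys x *m th.1
  + (g0 sys x + \sum_(j < qg) th.2 j 0 *: Gm sys x j) *m u + d.

Definition solves (sys : system) (th : param) (ctrl : R -> 'cV[R]_n -> 'cV[R]_m)
  (d : R -> 'cV[R]_n) (x : R -> 'cV[R]_n) (a b : R) : Prop :=
  {within `[a, b], continuous x} /\
  forall t, a < t < b ->
    derivable x t 1 /\ 'D_1 x t = rhs sys (x t) th (ctrl t (x t)) (d t).

Record tubetraj := TT {
  px : R -> 'cV[R]_n;
  pu : R -> 'cV[R]_m;
  tE : R -> set 'cV[R]_n
}.

Definition tube (p : tubetraj) (t : R) : set 'cV[R]_n := mink (px p t) (tE p t).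

Definition is_RCI (sys : system) (Th : set param) (S : R -> set 'cV[R]_n)
  (U : set 'cV[R]_m) (Gset : set 'cV[R]_n) (dU : R -> set 'cV[R]_m)
  (tf a b : R) (p : tubetraj) : Prop :=
  a <= b /\
  (forall t, a <= t <= b -> compact (tE p t) /\ tE p t 0) /\
  (exists thh, Th thh /\ solves sys thh (fun t _ => pu p t) (fun _ => 0) (px p) a b) /\
  (forall t, a <= t <= b -> pdiff (S t) (tE p t) (px p t) /\ pdiff U (dU t) (pu p t)) /\
  (b = tf -> pdiff Gset (tE p b) (px p b)) /\
  exists pi : R -> 'cV[R]_n -> 'cV[R]_m,
    (forall t x, a <= t <= b -> tube p t x -> dU t (pi t x)) /\
    forall (th : param) (d : R -> 'cV[R]_n) (x : R -> 'cV[R]_n),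
      Th th -> (forall t, Dadd sys (d t)) ->
      solves sys th (fun t y => pu p t + pi t y) d x a b ->
      tube p a (x a) -> forall t, a <= t <= b -> tube p t (x t).

Definition Jseg (ell : 'cV[R]_n -> 'cV[R]_m -> R) (ellT : 'cV[R]_n -> R) (tf : R)
  (p : tubetraj) (a b : R) : R :=
  Rintegral lebesgue_measure `[a, b] (fun t => ell (px p t) (pu p t))
  + (if b == tf then ellT (px p b) else 0).

Definition valid_pair (sys : system) (Th : set param) (S : R -> set 'cV[R]_n)
  (U : set 'cV[R]_m) (Gset : set 'cV[R]_n) (dU : R -> set 'cV[R]_m) (tf Tc tk : R)
  (bak info : tubetraj) (i : nat) : Prop :=
  let T := tk + i%:R * Tc in
  px info T = px bak T /\
  is_RCI sys Th S U Gset dU tf tk T info /\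
  (forall t, tk <= t <= T ->
     tube info t `<=` pdiff (S t) (tE info t) /\ pdiff U (dU t) (pu info t)).

Definition Jexec (ell : 'cV[R]_n -> 'cV[R]_m -> R) (ellT : 'cV[R]_n -> R) (tf : R)
  (tc : nat -> R) (com : nat -> tubetraj) (k : nat) : R :=
  \sum_(j < k) Jseg ell ellT tf (com j) (tc j) (tc j.+1).

Definition dJ (ell : 'cV[R]_n -> 'cV[R]_m -> R) (ellT : 'cV[R]_n -> R) (tf Tc tk : R)
  (bak info : tubetraj) (i : nat) : R :=
  Jseg ell ellT tf info tk (tk + i%:R * Tc) - Jseg ell ellT tf bak tk (tk + i%:R * Tc).

Definition score (lam Tc : R) (dw : R) (i : nat) : R := expR (- (lam * (i%:R * Tc))) * dw.

End Defs.

(* Main.v *)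
Require Import Defs.
From HB Require Import structures.
From mathcomp Require Import all_boot all_order all_algebra.
From mathcomp Require Import all_classical all_reals all_analysis.
From mathcomp Require Import ring lra.
Import Order.TTheory GRing.Theory Num.Theory.
Import numFieldNormedType.Exports.
Local Open Scope classical_set_scope.
Local Open Scope ring_scope.

Theorem theorem1 (R : realType) (n m qf qg r : nat)
  (sys : system R n m qf qg)
  (S : R -> set 'cV[R]_n) (U : set 'cV[R]_m) (Gset : set 'cV[R]_n)
  (dU : R -> set 'cV[R]_m)
  (ell : 'cV[R]_n -> 'cV[R]_m -> R) (ellT : 'cV[R]_n -> R)
  (t0 tf B Tc lam wbar : R)
  (* set-membership identification data: z = Phi(x,u) theta* + w *)
  (Phif : 'cV[R]_n -> 'cV[R]_m -> 'M[R]_(r, qf))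
  (Phig : 'cV[R]_n -> 'cV[R]_m -> 'M[R]_(r, qg))
  (z w : R -> 'cV[R]_r) (thstar : param R qf qg)
  (* true (executed) state and input *)
  (xtrue : R -> 'cV[R]_n) (utrue : R -> 'cV[R]_m)
  (* the run of the procedure: commits k = 0, ..., K-1 at times tc k *)
  (K : nat) (tc : nat -> R) (Th : nat -> set (param R qf qg))
  (bak : nat -> tubetraj R n m) (info : nat -> nat -> tubetraj R n m)
  (dw : nat -> nat -> R) (Nk : nat -> nat) (ic : nat -> nat)
  (com : nat -> tubetraj R n m) :
  0 < Tc -> 0 < lam -> t0 < tf ->
  (0 < K)%N -> tc 0%N = t0 -> tc K = tf ->
  compact (Th 0%N) -> Th 0%N thstar ->
  (forall s, z s = Phif (xtrue s) (utrue s) *m thstar.1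
                   + Phig (xtrue s) (utrue s) *m thstar.2 + w s
             /\ forall i, `|w s i 0| <= wbar) ->
  (* parameter-set update by set-membership identification *)
  (forall k, (k < K)%N ->
     Th k.+1 = Th k `&` [set th | forall s, tc k <= s <= tc k.+1 ->
        forall i, `|z s i 0 - (Phif (xtrue s) (utrue s) *m th.1
                               + Phig (xtrue s) (utrue s) *m th.2) i 0| <= wbar]) ->
  (* backups: RCI tube trajectories on [t_k, t_f] built from Th k, inside S *)
  (forall k, (k < K)%N ->
     [/\ is_RCI sys (Th k) S U Gset dU tf (tc k) tf (bak k),
         forall t, tc k <= t <= tf -> tube (bak k) t `<=` S t,
         tube (bak k) (tc k) (xtrue (tc k)) &
         lebesgue_measure.-integrable `[tc k, tf]
           (fun t => (ell (px (bak k) t) (pu (bak k) t))%:E)]) ->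
  (* N_k = max {i | t_k + i Tc <= t_f} *)
  (forall k, (k < K)%N ->
     (Nk k)%:R * Tc <= tf - tc k < (Nk k).+1%:R * Tc) ->
  (* monotonicity of the tube cost under set inclusion *)
  (forall k, (k.+1 < K)%N -> Th k.+1 `<=` Th k ->
     Jseg ell ellT tf (bak k.+1) (tc k.+1) tf <= Jseg ell ellT tf (bak k) (tc k.+1) tf) ->
  (* initial backup within budget *)
  Jseg ell ellT tf (bak 0%N) (tc 0%N) tf <= B ->
  (* commitment rule, with F^c_k the budget-feasible set of valid pairs *)
  (forall k, (k < K)%N ->
     let F := [set i : nat | [/\ (1 <= i <= Nk k)%N,
                  valid_pair sys (Th k) S U Gset dU tf Tc (tc k) (bak k) (info k i) i &
                  Jexec ell ellT tf tc com k + Jseg ell ellT tf (bak k) (tc k) tf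
                  + dJ ell ellT tf Tc (tc k) (bak k) (info k i) i <= B]] in
     ((exists i, F i) ->
        [/\ F (ic k),
            forall j, F j -> score lam Tc (dw k j) j <= score lam Tc (dw k (ic k)) (ic k) &
            com k = info k (ic k)]) /\
     (~ (exists i, F i) -> ic k = 1%N /\ com k = bak k)) ->
  (* next commit time at the end of the committed horizon *)
  (forall k, (k < K)%N -> tc k.+1 = tc k + (ic k)%:R * Tc) ->
  (* the system tracks each committed tube *)
  (forall k, (k < K)%N -> forall t, tc k <= t <= tc k.+1 -> tube (com k) t (xtrue t)) ->
  [/\ (forall t, t0 <= t <= tf -> exists2 k, (k < K)%N & tc k <= t <= tc k.+1),
      (forall k, (k < K)%N -> forall t, tc k <= t <= tc k.+1 -> tube (com k) t `<=` S t) &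
      \sum_(k < K) Jseg ell ellT tf (com k) (tc k) (tc k.+1) <= B].
Proof.
move=> Tc0 lam0 t0tf K0 tc0 tcK cTh Thst zw Thup bakH NkH monoH B0 comH tcS trk.
have icpos : forall k, (k < K)%N -> (1 <= ic k)%N.
  move=> k hk; have [H1 H2] := comH k hk.
  case: (pselect (exists i, [/\ (1 <= i <= Nk k)%N,
                  valid_pair sys (Th k) S U Gset dU tf Tc (tc k) (bak k) (info k i) i &
                  Jexec ell ellT tf tc com k + Jseg ell ellT tf (bak k) (tc k) tf
                  + dJ ell ellT tf Tc (tc k) (bak k) (info k i) i <= B])) => hex.
    by have [[/andP[]]] := H1 hex.
  by have [-> _] := H2 hex.
have tcinc : forall k, (k < K)%N -> tc k < tc k.+1.
  move=> k hk; rewrite tcS // ltrDl mulr_gt0 // ltr0n.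
  exact: leq_trans (icpos k hk).
have tcle : forall k j, (k + j <= K)%N -> tc k <= tc (k + j)%N.
  move=> k; elim=> [|j IH] hj; first by rewrite addn0.
  rewrite addnS; apply: le_trans (IH (ltnW _)) _; first by rewrite -addnS.
  apply/ltW/tcinc; by rewrite -addnS.
have tcleK : forall k, (k <= K)%N -> tc k <= tf.
  by move=> k hk; rewrite -tcK -(subnKC hk); apply: tcle; rewrite subnKC.
have tcltK : forall k, (k < K)%N -> tc k < tf.
  by move=> k hk; apply: lt_le_trans (tcinc k hk) (tcleK _ hk).
split.
- move=> t /andP[t0t ttf].
  suff: forall j, (j <= K)%N -> t <= tc j -> exists2 k, (k < K)%N & tc k <= t <= tc k.+1.
    by move=> /(_ K (leqnn _)); rewrite tcK; apply.
  elim=> [|j IH] hj htj.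
    exists 0%N => //; rewrite -tc0 in t0t; have -> : t = tc 0%N by apply/le_anti; rewrite htj t0t.
    by rewrite lexx /= ltW // tcinc.
  case: (leP t (tc j)) => h; first exact: IH (ltnW hj) h.
  by exists j => //; rewrite (ltW h) htj.
- move=> k hk t /andP[h1 h2]; have [H1 H2] := comH k hk.
  case: (pselect (exists i, [/\ (1 <= i <= Nk k)%N,
                  valid_pair sys (Th k) S U Gset dU tf Tc (tc k) (bak k) (info k i) i &
                  Jexec ell ellT tf tc com k + Jseg ell ellT tf (bak k) (tc k) tf
                  + dJ ell ellT tf Tc (tc k) (bak k) (info k i) i <= B])) => hex.
    have [[_ hvp _] _ ->] := H1 hex.
    move: hvp; rewrite /valid_pair -tcS // => -[_ [[_ [hE _]] hV]].
    have ht : tc k <= t <= tc k.+1 by rewrite h1 h2.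
    move=> x hx0; have hx := proj1 (hV t ht) x hx0.
    have := hx 0 (proj2 (hE t ht)).
    by rewrite addr0.
  have [_ ->] := H2 hex.
  have [_ hS _ _] := bakH k hk; apply: hS.
  by rewrite h1 (le_trans h2) // tcleK.
- have JexS : forall k, Jexec ell ellT tf tc com k.+1 =
      Jexec ell ellT tf tc com k + Jseg ell ellT tf (com k) (tc k) (tc k.+1).
    by move=> k; rewrite /Jexec big_ord_recr.
  have Jsplit : forall k, (k.+1 < K)%N ->
     Jseg ell ellT tf (bak k) (tc k) tf - Jseg ell ellT tf (bak k) (tc k) (tc k.+1)
     = Jseg ell ellT tf (bak k) (tc k.+1) tf.
    move=> k hk; have hk' : (k < K)%N by exact: ltnW.
    have [_ _ _ hint] := bakH k hk'.
    rewrite /Jseg eqxx (lt_eqF (tcltK _ hk)) addr0.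
    rewrite addrAC (Rintegral_itvB hint) ?bnd_simp ?ltW ?tcinc ?tcltK //.
    rewrite Rintegral_itv_obnd_cbnd //.
    apply: integrableS hint => //; apply: subset_itvr; rewrite bnd_simp ltW // tcinc //.
  have step : forall k, (k < K)%N ->
     Jexec ell ellT tf tc com k + Jseg ell ellT tf (bak k) (tc k) tf <= B ->
     Jexec ell ellT tf tc com k.+1 +
       (Jseg ell ellT tf (bak k) (tc k) tf - Jseg ell ellT tf (bak k) (tc k) (tc k.+1)) <= B.
    move=> k hk hP; rewrite JexS; have [H1 H2] := comH k hk.
    case: (pselect (exists i, [/\ (1 <= i <= Nk k)%N,
                  valid_pair sys (Th k) S U Gset dU tf Tc (tc k) (bak k) (info k i) i &
                  Jexec ell ellT tf tc com k + Jseg ell ellT tf (bak k) (tc k) tf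
                  + dJ ell ellT tf Tc (tc k) (bak k) (info k i) i <= B])) => hex.
      have [[_ _ hB] _ ->] := H1 hex.
      move: hB; rewrite /dJ -tcS //.
      apply: le_trans; rewrite le_eqVlt; apply/orP; left; apply/eqP; ring.
    have [_ ->] := H2 hex.
    apply: le_trans hP; rewrite le_eqVlt; apply/orP; left; apply/eqP; ring.
  have inv : forall k, (k < K)%N ->
     Jexec ell ellT tf tc com k + Jseg ell ellT tf (bak k) (tc k) tf <= B.
    elim=> [|k IH] hk.
      by rewrite /Jexec big_ord0 add0r.
    have hk' : (k < K)%N by exact: ltnW.
    have := step k hk' (IH hk'); rewrite Jsplit //.
    apply: le_trans; rewrite lerD2l.
    apply: monoH => //.
    by rewrite Thup // => th [].
  have [K' hK] : exists K', K = K'.+1 by exists K.-1; rewrite prednK.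
  have hK' : (K' < K)%N by rewrite hK.
  have := step K' hK' (inv K' hK').
  rewrite -hK tcK subrr addr0 => H.
  exact: H.
Qed.
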